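(* Let $(X,\rho,\mu)$ be a $K$-doubling metric measure space, let $U\subseteq X$ be nonempty and let $x$ be a $\mu$-interior point of $U$. Then there exists a map $r_x\colon X\to U$ such that $r_x(y)=y$ for all $y\in U$ and $\rho\big(y,r_x(y)\big)=o\big(\rho(y,x)\big)$ as $y\to x$.
   Context: A $K$-doubling metric measure space ($K>0$) is a triple $(X,\rho,\mu)$ where $(X,\rho)$ is a complete separable metric space and $\mu$ is a Borel-regular outer measure on $X$ with $0<\mu(B_{2r}(x))\le K\mu(B_r(x))<+\infty$ for all $x\in X$, $r>0$. A point $x\in U$ is a $\mu$-interior point of $U$ if there is a Borel set $B\subseteq U$ with $\lim_{r\to0^+}\mu(B_r(x)\setminus B)/\mu(B_r(x))=0$. *)

(* Defs.v *)
From HB Require Import structures.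
From mathcomp Require Import all_boot all_order all_algebra.
From mathcomp Require Import all_classical all_reals all_analysis.
Set Implicit Arguments. Unset Strict Implicit. Unset Printing Implicit Defensive.
Import Order.TTheory GRing.Theory Num.Theory.
Local Open Scope classical_set_scope.
Local Open Scope ring_scope.

Definition is_metric (R : realType) (X : Type) (rho : X -> X -> R) : Prop :=
  [/\ forall x y, 0 <= rho x y,
      forall x y, rho x y = 0 <-> x = y,
      forall x y, rho x y = rho y x
    & forall x y z, rho x z <= rho x y + rho y z].

Definition mball (R : realType) (X : Type) (rho : X -> X -> R) (x : X) (r : R)
  : set X := [set y | rho x y < r].

Definition metric_complete (R : realType) (X : Type) (rho : X -> X -> R) : Prop :=
  forall u : nat -> X,
    (forall eps : R, 0 < eps -> exists N : nat, forall m n : nat,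
        (N <= m)%N -> (N <= n)%N -> rho (u m) (u n) < eps) ->
    exists l : X, forall eps : R, 0 < eps -> exists N : nat, forall n : nat,
        (N <= n)%N -> rho (u n) l < eps.

Definition metric_separable (R : realType) (X : Type) (rho : X -> X -> R) : Prop :=
  exists D : set X, countable D /\
    forall (x : X) (eps : R), 0 < eps -> exists2 d, D d & rho x d < eps.

Definition metric_open (R : realType) (X : Type) (rho : X -> X -> R) (U : set X)
  : Prop := forall x, U x -> exists2 r : R, 0 < r & mball rho x r `<=` U.

Definition metric_borel (R : realType) (X : Type) (rho : X -> X -> R) : set (set X) :=
  <<s [set U | metric_open rho U] >>.

Definition borel_regular (R : realType) (X : Type) (rho : X -> X -> R)
  (mu : {outer_measure set X -> \bar R}) : Prop :=
  (forall B, metric_borel rho B -> mu.-caratheodory B) /\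
  (forall A : set X, exists B, [/\ metric_borel rho B, A `<=` B & mu B = mu A]).

Definition doubling_mms (R : realType) (X : Type) (K : R) (rho : X -> X -> R)
  (mu : {outer_measure set X -> \bar R}) : Prop :=
  [/\ 0 < K, is_metric rho, metric_complete rho /\ metric_separable rho,
      borel_regular rho mu &
      forall (x : X) (r : R), 0 < r ->
        [/\ (0 < mu (mball rho x r))%E,
            (mu (mball rho x (2 * r)) <= K%:E * mu (mball rho x r))%E &
            (mu (mball rho x r) < +oo)%E]].

Definition mu_interior_point (R : realType) (X : Type) (rho : X -> X -> R)
  (mu : {outer_measure set X -> \bar R}) (U : set X) (x : X) : Prop :=
  U x /\
  exists B : set X, [/\ metric_borel rho B, B `<=` U &
    (fun r : R => fine (mu (mball rho x r `\` B)) / fine (mu (mball rho x r)))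
      @ 0%R^'+ --> (0%R : R^o)].

(* Main.v *)
Require Import Defs.
From HB Require Import structures.
From mathcomp Require Import all_boot all_order all_algebra.
From mathcomp Require Import all_classical all_reals all_analysis.
Import Order.TTheory GRing.Theory Num.Theory.
Local Open Scope classical_set_scope.
Local Open Scope ring_scope.
From mathcomp Require Import ring lra.

Lemma dbl_iter (R : realType) (X : Type) (K : R) (rho : X -> X -> R)
  (mu : {outer_measure set X -> \bar R}) :
  0 <= K ->
  (forall (x : X) (r : R), 0 < r -> (mu (mball rho x (2 * r)) <= K%:E * mu (mball rho x r))%E) ->
  forall y t k, 0 < t -> (mu (mball rho y (2^+k * t)) <= (K^+k)%:E * mu (mball rho y t))%E.
Proof.
move=> K0 hD y t k t0; elim: k => [|k IH]; first by rewrite expr0 mul1r mul1e.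
rewrite exprS -mulrA; apply: le_trans (hD _ _ _) _.
  by rewrite mulr_gt0 // exprn_gt0.
rewrite exprS EFinM -muleA; apply: lee_wpmul2l => //; by rewrite lee_fin.
Qed.

Lemma near_right_ex (R : realType) (P : R -> Prop) :
  (\forall t \near 0^'+, P t) -> exists2 e : R, 0 < e & forall t, 0 < t < e -> P t.
Proof.
rewrite near_withinE => /nbhs_normP [e e0 H].
exists e => // t /andP[t0 te]; apply: H => //=.
by rewrite sub0r normrN gtr0_norm.
Qed.
Lemma claim (R : realType) (X : Type) (K : R) (rho : X -> X -> R)
  (mu : {outer_measure set X -> \bar R}) (B : set X) (x : X) :
  0 < K -> is_metric rho ->
  (forall (x : X) (r : R), 0 < r ->
        [/\ (0 < mu (mball rho x r))%E,
            (mu (mball rho x (2 * r)) <= K%:E * mu (mball rho x r))%E &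
            (mu (mball rho x r) < +oo)%E]) ->
  (fun r : R => fine (mu (mball rho x r `\` B)) / fine (mu (mball rho x r)))
      @ 0%R^'+ --> (0%R : R^o) ->
  forall n, exists2 delta : R, 0 < delta & forall y, 0 < rho y x < delta ->
     exists2 z, B z & rho y z < rho y x / 2^+n.
Proof.
move=> K0 [r0 r1 rs rt] hM hlim n.
have hD : forall (x : X) (r : R), 0 < r -> (mu (mball rho x (2 * r)) <= K%:E * mu (mball rho x r))%E.
  by move=> z r rp; case: (hM z r rp).
set m := n.+2.
have Km : 0 < K ^+ m by rewrite exprn_gt0.
have eta0 : 0 < (K ^+ m)^-1 by rewrite invr_gt0.
have [e e0 He] := near_right_ex _ _ (proj1 (cvgrPdist_lt _ _) hlim _ eta0).
exists (e / 2); first by rewrite divr_gt0.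
move=> y /andP[d0 de].
set d := rho y x in d0 de *.
apply: contrapT => H.
have r0' : 0 < 2 * d by rewrite mulr_gt0.
have := He (2 * d). rewrite r0' /=.
have -> : 2 * d < e. by rewrite -ltr_pdivlMl // mulrC.
move=> /(_ isT).
set a := mu _; set b := mu _.
have [bpos _ bfin] := hM x (2 * d) r0'.
have a0 : (0 <= a)%E by apply: outer_measure_ge0.
have ab : (a <= b)%E by apply: le_outer_measure; apply: subDsetl.
have afin : a \is a fin_num by rewrite ge0_fin_numE //; apply: le_lt_trans bfin.
have bfin' : b \is a fin_num by rewrite ge0_fin_numE // ltW.
have p2 : 0 < 2 ^+ n :> R by rewrite exprn_gt0.
have t0 : 0 < d / 2 ^+ n by rewrite divr_gt0.
have inc1 : mball rho y (d / 2 ^+ n) `<=` mball rho x (2 * d) `\` B.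
  move=> z; rewrite /mball /= => hz; split.
    apply: le_lt_trans (rt x y z) _.
    have : d / 2 ^+ n <= d.
      rewrite ler_pdivrMr // ler_peMr //; first exact: ltW.
      by rewrite exprn_ege1 // ler1n.
    rewrite (rs x y) -/d; lra.
  by move=> Bz; apply: H; exists z.
have inc2 : mball rho x (2 * d) `<=` mball rho y (2 ^+ m * (d / 2 ^+ n)).
  have -> : 2 ^+ m * (d / 2 ^+ n) = 4 * d.
    rewrite /m !exprS; field; exact: lt0r_neq0.
  move=> z; rewrite /mball /= => hz.
  apply: le_lt_trans (rt y x z) _; rewrite -/d; lra.
have key : (b <= (K ^+ m)%:E * a)%E.
  have := le_outer_measure mu _ _ inc2. move=> HH. rewrite /b; apply: (le_trans HH).
  apply: (le_trans (dbl_iter _ _ _ _ _ (ltW K0) hD y _ m t0)).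
  apply: lee_wpmul2l; first by rewrite lee_fin ltW.
  exact: le_outer_measure.
have fb0 : 0 < fine b by rewrite -lte_fin fineK.
have fa0 : 0 <= fine a by rewrite -lee_fin fineK.
move: key; rewrite -(fineK afin) -(fineK bfin') -EFinM !lee_fin => /= key; rewrite /=.
rewrite sub0r normrN ger0_norm; last by rewrite divr_ge0 // ltW.
rewrite ltr_pdivrMr //; apply/negP; rewrite -leNgt.
rewrite -[leRHS](mulKf (lt0r_neq0 Km)).
by rewrite ler_wpM2l // invr_ge0 ltW.
Qed.

Theorem proposition2p3 (R : realType) (X : Type) (K : R) (rho : X -> X -> R)
  (mu : {outer_measure set X -> \bar R}) (U : set X) (x : X) :
  doubling_mms K rho mu ->
  U !=set0 ->
  mu_interior_point rho mu U x ->
  exists r_x : X -> X,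
    [/\ forall y, U (r_x y),
        forall y, U y -> r_x y = y &
        forall eps : R, 0 < eps -> exists2 delta : R, 0 < delta &
          forall y, rho y x < delta -> rho y (r_x y) <= eps * rho y x].
Proof.
move=> [K0 hmet _ _ hM] _ [Ux [B [_ BU hlim]]].
have [r0 r1 rs rt] := hmet.
have hch : forall y, exists z, [/\ U z, U y -> z = y &
    ~ U y -> rho y z < inf [set rho y w | w in U] + rho y x ^+ 2].
  move=> y; case: (pselect (U y)) => Uy.
    by exists y; split.
  have dpos : 0 < rho y x.
    rewrite lt0r r0 andbT; apply/eqP => /r1 yx; apply: Uy; by rewrite yx.
  have hinf : has_inf [set rho y w | w in U].
    split; first by exists (rho y x), x.
    by exists 0 => _ [w _ <-].
  have [e [w Uw <-] he] := inf_adherent (exprn_gt0 2 dpos) hinf.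
  by exists w; split.
have [f hf] := choice hch.
exists f; split; first by move=> y; case: (hf y).
  by move=> y Uy; case: (hf y) => _ ->.
move=> eps e0.
set n := Num.Def.archi_bound (2 / eps).
have hn : 2 / eps < 2 ^+ n.
  apply: (lt_le_trans (archi_boundP _)); first by rewrite ltW // divr_gt0.
  rewrite -natrX ler_nat; apply: ltnW; exact: ltn_expl.
have [d1 d1p H1] := claim _ _ _ _ _ _ _ K0 hmet hM hlim n.
exists (Num.min d1 (eps / 2)).
  by rewrite lt_min d1p divr_gt0.
move=> y; rewrite lt_min => /andP[yd1 ye].
case: (hf y) => _ hU hnU.
case: (pselect (U y)) => Uy.
  rewrite hU // (proj2 (r1 y y) erefl); apply: mulr_ge0; [exact: ltW | exact: r0].
have dpos : 0 < rho y x.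
  rewrite lt0r r0 andbT; apply/eqP => /r1 yx; apply: Uy; by rewrite yx.
have [z Bz hz] := H1 y (introT andP (conj dpos yd1)).
have hinf : inf [set rho y w | w in U] <= rho y z.
  apply: ge_inf; first by exists 0 => _ [w _ <-].
  by exists z => //; apply: BU.
have := hnU Uy.
have p2 : 0 < 2 ^+ n :> R by rewrite exprn_gt0.
have h1 : rho y x / 2 ^+ n <= eps / 2 * rho y x.
  have hn' : 2 < 2 ^+ n * eps by rewrite -ltr_pdivrMr.
  have q1 : (2 ^+ n)^-1 * 2 ^+ n = 1 :> R by rewrite mulVf // gt_eqF.
  have q0 : 0 < (2 ^+ n)^-1 :> R by rewrite invr_gt0.
  have hq : (2 ^+ n)^-1 <= eps / 2 by nra.
  rewrite mulrC ler_wpM2r ?r0 //.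
have h2 : rho y x ^+ 2 <= eps / 2 * rho y x.
  by rewrite expr2 ler_wpM2r ?r0 // ltW.
lra.
Qed.
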